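(* Let $A \in \mathbb{R}^{n \times r}$, $B \in \mathbb{R}^{r \times n}$, $s=\mathrm{rank}(A)$, and for $\kappa\in\mathbb{R}^r_+$ let $f_\kappa\colon\mathbb{R}^n_+\to\mathbb{R}^n$, $f_\kappa(x)=A_\kappa x^B$. The following are equivalent: (inj) $f_\kappa$ is injective with respect to $\mathrm{im}(A)$, for all $\kappa \in \mathbb{R}^r_+$; (min) for all $I\subseteq [n]$, $J\subseteq [r]$ of cardinality $s$, the product $\det(A_{I,J}) \det(B_{J,I})$ either is zero or has the same sign as all other nonzero such products, and at least one such product is nonzero.
   Context: $\mathbb{R}_+$ denotes the strictly positive reals. $(x^B)_j=\prod_i x_i^{b_{ji}}$ (real exponents), $A_\kappa=A\,\mathrm{diag}(\kappa)$, $[n]=\{1,\dots,n\}$, $M_{K,L}$ is the submatrix with rows in $K$ and columns in $L$. A function $g$ on $\mathbb{R}^n_+$ is injective with respect to $S$ if $x,y\in\mathbb{R}^n_+$, $x\ne y$, $x-y\in S$ imply $g(x)\neq g(y)$. *)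

(* Defs.v *)
From HB Require Import structures.
From Stdlib Require Import Reals ClassicalEpsilon FunctionalExtensionality.
From mathcomp Require Import all_boot all_order all_algebra.

Set Implicit Arguments.
Unset Strict Implicit.
Unset Printing Implicit Defensive.

Import GRing.Theory.

Definition R_eqb (x y : R) : bool := if Req_EM_T x y then true else false.
Lemma R_eqP : Equality.axiom R_eqb.
Proof. move=> x y; rewrite /R_eqb; case: Req_EM_T => h; by constructor. Qed.
HB.instance Definition _ := hasDecEq.Build R R_eqP.

Definition R_find (P : pred R) (n : nat) : option R :=
  match excluded_middle_informative (exists x, P x) with
  | left h => Some (proj1_sig (constructive_indefinite_description _ h))
  | right _ => None
  end.
Lemma R_find_correct P n x : R_find P n = Some x -> P x.
Proof.
rewrite /R_find; case: excluded_middle_informative => // h [<-].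
exact: proj2_sig (constructive_indefinite_description _ h).
Qed.
Lemma R_find_complete (P : pred R) : (exists x, P x) -> exists n, R_find P n.
Proof. move=> h; exists 0%N; rewrite /R_find; by case: excluded_middle_informative. Qed.
Lemma R_find_ext (P Q : pred R) : P =1 Q -> R_find P =1 R_find Q.
Proof. move=> h; have -> : P = Q by apply: functional_extensionality. by []. Qed.
HB.instance Definition _ := hasChoice.Build R R_find_correct R_find_complete R_find_ext.

Lemma R_addA : associative Rplus. Proof. move=> x y z; ring. Qed.
Lemma R_addC : commutative Rplus. Proof. move=> x y; ring. Qed.
Lemma R_add0 : left_id R0 Rplus. Proof. move=> x; ring. Qed.
Lemma R_addN : left_inverse R0 Ropp Rplus. Proof. move=> x; ring. Qed.
HB.instance Definition _ := GRing.isZmodule.Build R R_addA R_addC R_add0 R_addN.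

Lemma R_mulA : associative Rmult. Proof. move=> x y z; ring. Qed.
Lemma R_mulC : commutative Rmult. Proof. move=> x y; ring. Qed.
Lemma R_mul1 : left_id R1 Rmult. Proof. move=> x; ring. Qed.
Lemma R_mulDl : left_distributive Rmult Rplus. Proof. move=> x y z; ring. Qed.
Lemma R_one_neq0 : (R1 : R) != R0.
Proof. apply/eqP; exact: R1_neq_R0. Qed.
HB.instance Definition _ :=
  GRing.Zmodule_isComNzRing.Build R R_mulA R_mulC R_mul1 R_mulDl R_one_neq0.

Definition R_inv (x : R) : R := if x == R0 then R0 else Rinv x.
Lemma R_mulVf (x : R) : x != R0 -> Rmult (R_inv x) x = R1.
Proof.
rewrite /R_inv => hx; rewrite (negbTE hx); apply: Rinv_l => h; by rewrite h eqxx in hx.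
Qed.
Lemma R_inv0 : R_inv R0 = R0. Proof. by rewrite /R_inv eqxx. Qed.
HB.instance Definition _ := GRing.ComNzRing_isField.Build R R_mulVf R_inv0.

Local Open Scope ring_scope.

Definition monomials (n r : nat) (B : 'M[R]_(r, n)) (x : 'I_n -> R) : 'I_r -> R :=
  fun j => \prod_(i < n) Rpower (x i) (B j i).

(* f_kappa(x) = A_kappa x^B = A diag(kappa) x^B *)
Definition f_kappa (n r : nat) (A : 'M[R]_(n, r)) (B : 'M[R]_(r, n))
  (kappa : 'I_r -> R) (x : 'I_n -> R) : 'I_n -> R :=
  fun i => \sum_(j < r) A i j * kappa j * monomials B x j.

Definition positive_vec (m : nat) (x : 'I_m -> R) : Prop := forall i, Rlt R0 (x i).

Definition in_image (n r : nat) (A : 'M[R]_(n, r)) (z : 'I_n -> R) : Prop :=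
  exists v : 'I_r -> R, forall i, z i = \sum_(j < r) A i j * v j.

Definition injective_wrt_image (n r : nat) (A : 'M[R]_(n, r)) (g : ('I_n -> R) -> ('I_n -> R)) : Prop :=
  forall x y : 'I_n -> R, positive_vec x -> positive_vec y -> x <> y ->
    in_image A (fun i => x i - y i) -> g x <> g y.

(* submatrix M_{K,L} with rows K and columns L (listed increasingly), |K| = |L| = s *)
Definition submx_sets (m p s : nat) (M : 'M[R]_(m, p)) (K : {set 'I_m}) (L : {set 'I_p})
  (hK : #|K| = s) (hL : #|L| = s) : 'M[R]_s :=
  \matrix_(a < s, b < s) M (enum_val (cast_ord (esym hK) a)) (enum_val (cast_ord (esym hL) b)).

Definition minor_prod (n r s : nat) (A : 'M[R]_(n, r)) (B : 'M[R]_(r, n))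
  (I : {set 'I_n}) (J : {set 'I_r}) (hI : #|I| = s) (hJ : #|J| = s) : R :=
  \det (submx_sets A hI hJ) * \det (submx_sets B hJ hI).

(* Main.v *)
Require Import Defs.
From Stdlib Require Import Reals Lra Psatz FunctionalExtensionality Classical.
From mathcomp Require Import all_boot all_order all_fingroup all_algebra.
Set Implicit Arguments.
Unset Strict Implicit.
Unset Printing Implicit Defensive.
Import GRing.Theory.
Local Open Scope ring_scope.

Section CB.
Variable K : comNzRingType.

Definition ej (m s : nat) (J : {set 'I_m}) (h : #|J| = s) : 'I_s -> 'I_m :=
  fun a => enum_val (cast_ord (esym h) a).

Lemma ej_in m s (J : {set 'I_m}) (h : #|J| = s) a : ej h a \in J.
Proof. exact: enum_valP. Qed.

Lemma ej_inj m s (J : {set 'I_m}) (h : #|J| = s) : injective (ej h).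
Proof. by move=> a b /enum_val_inj /cast_ord_inj. Qed.

Lemma ej_imset m s (J : {set 'I_m}) (h : #|J| = s) : ej h @: setT = J.
Proof.
apply/eqP; rewrite eqEcard; apply/andP; split.
  by apply/subsetP=> j /imsetP [a _ ->]; exact: ej_in.
by rewrite card_imset ?cardsT ?card_ord ?h //; exact: ej_inj.
Qed.

Lemma FS s m (P : 'M[K]_(s, m)) (Q : 'M[K]_(m, s)) :
  \det (P *m Q) = \sum_(f : {ffun 'I_s -> 'I_m}) (\prod_a P a (f a)) * \det (rowsub f Q).
Proof.
rewrite /(\det _).
pose AB (t : 'S_s) i j := P i j * Q j (t i).
transitivity (\sum_(t : 'S_s) \sum_(f : {ffun 'I_s -> 'I_m}) (-1) ^+ t * \prod_i AB t i (f i)).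
  apply: eq_bigr => /= t _; rewrite -big_distrr /=.
  congr (_ * _); rewrite -(bigA_distr_bigA (AB t)) /=.
  by apply: eq_bigr => x _; rewrite mxE.
rewrite exchange_big; apply: eq_bigr => f _ /=.
rewrite big_distrr /=; apply: eq_bigr => t _.
rewrite mulrCA; congr (_ * _); rewrite /AB big_split /=; congr (_ * _).
by apply: eq_bigr => i _; rewrite mxE.
Qed.

Lemma FS0 s m (P : 'M[K]_(s, m)) (Q : 'M[K]_(m, s)) (f : {ffun 'I_s -> 'I_m}) :
  ~~ injectiveb f -> \det (rowsub f Q) = 0.
Proof.
case/injectivePn=> i1 [i2 Di12 Ef12].
by apply: (determinant_alternate Di12) => j; rewrite !mxE Ef12.
Qed.

Definition CBt s m (P : 'M[K]_(s, m)) (Q : 'M[K]_(m, s)) (J : {set 'I_m}) : K :=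
  if #|J| =P s is ReflectT h then \det (colsub (ej h) P) * \det (rowsub (ej h) Q) else 0.

Lemma cauchy_binet s m (P : 'M[K]_(s, m)) (Q : 'M[K]_(m, s)) :
  \det (P *m Q) = \sum_(J : {set 'I_m}) CBt P Q J.
Proof.
rewrite FS (partition_big (fun f : {ffun 'I_s -> 'I_m} => f @: setT) predT) //=.
apply: eq_bigr => J _; rewrite /CBt; case: eqP => [h|hne]; last first.
  apply: big1 => f /eqP fJ; case: (boolP (injectiveb f)) => [/injectiveP fi|fni].
    by case: hne; rewrite -fJ card_imset // cardsT card_ord.
  by rewrite FS0 ?mulr0.
pose Phi (g : {ffun 'I_s -> 'I_s}) : {ffun 'I_s -> 'I_m} := [ffun a => ej h (g a)].
have Phi_inj : {in setT &, injective Phi}.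
  move=> g1 g2 _ _ /ffunP E; apply/ffunP => a; move: (E a); rewrite !ffunE.
  exact: ej_inj.
transitivity (\sum_(f in Phi @: setT) (\prod_a P a (f a)) * \det (rowsub f Q)).
  rewrite [LHS]big_mkcond [RHS]big_mkcond /=; apply: eq_bigr => f _.
  case: (boolP (injectiveb f)) => [/injectiveP fi|fni]; last first.
    by rewrite FS0 ?mulr0 ?if_same.
  case: (boolP (f \in Phi @: setT)) => [/imsetP [g _ Ef]|fnot].
    rewrite Ef in fi *.
    suff -> : Phi g @: setT == J by [].
    rewrite eqEcard; apply/andP; split.
      by apply/subsetP => j /imsetP [a _ ->]; rewrite ffunE ej_in.
    by rewrite card_imset // cardsT card_ord h.
  case: eqP => // fJ; case/negP: fnot.
  have Hf : forall a, f a \in J by move=> a; rewrite -fJ; apply: imset_f.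
  apply/imsetP; exists [ffun a => cast_ord h (enum_rank_in (Hf a) (f a))]; first by rewrite in_setT.
  apply/ffunP => a; rewrite !ffunE /ej cast_ordK enum_rankK_in //.
rewrite big_imset //= -det_mulmx FS; apply: eq_big => [g|g _]; first by rewrite in_setT.
congr (_ * _).
  by apply: eq_bigr => a _; rewrite !mxE ffunE.
by congr (\det _); apply/matrixP => i j; rewrite !mxE ffunE.
Qed.

End CB.
Section Expand.
Variables (n r : nat) (A : 'M[R]_(n, r)) (B : 'M[R]_(r, n)).
Local Notation s := (\rank A).
Local Notation C := (col_base A).
Local Notation F := (row_base A).

Definition Nmx (lam : 'I_r -> R) (gam : 'I_n -> R) : 'M[R]_s :=
  F *m diag_mx (\row_j lam j) *m B *m diag_mx (\row_i gam i) *m C.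

Definition mpd (I : {set 'I_n}) (J : {set 'I_r}) : R :=
  if #|I| =P s is ReflectT hI then
    if #|J| =P s is ReflectT hJ then minor_prod A B hI hJ else 0 else 0.

Definition Dexp (lam : 'I_r -> R) (gam : 'I_n -> R) : R :=
  \sum_(I : {set 'I_n}) \sum_(J : {set 'I_r})
     (\prod_(j in J) lam j) * (\prod_(i in I) gam i) * mpd I J.

Lemma mpdE (I : {set 'I_n}) (J : {set 'I_r}) (hI : #|I| = s) (hJ : #|J| = s) : mpd I J = minor_prod A B hI hJ.
Proof.
rewrite /mpd; case: eqP => [hI'|]; last by rewrite hI.
case: eqP => [hJ'|]; last by rewrite hJ.
by rewrite (eq_irrelevance hI' hI) (eq_irrelevance hJ' hJ).
Qed.

Lemma mpd0 (I : {set 'I_n}) (J : {set 'I_r}) : #|I| != s \/ #|J| != s -> mpd I J = 0.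
Proof.
move=> H; rewrite /mpd; case: (#|I| =P s) => [hI|//]; case: (#|J| =P s) => [hJ|//].
by move: H; rewrite hI hJ eqxx; case.
Qed.

Lemma minor_prodE (I : {set 'I_n}) (J : {set 'I_r}) (hI : #|I| = s) (hJ : #|J| = s) :
  minor_prod A B hI hJ = \det (mxsub (ej hI) (ej hJ) A) * \det (mxsub (ej hJ) (ej hI) B).
Proof. by []. Qed.

End Expand.

Lemma prod_ej m s (J : {set 'I_m}) (h : #|J| = s) (lam : 'I_m -> R) :
  \prod_(a < s) lam (ej h a) = \prod_(j in J) lam j.
Proof.
rewrite -{2}(ej_imset h) big_imset /=; last by move=> a b _ _; exact: ej_inj.
by apply: eq_bigl => a; rewrite in_setT.
Qed.

Lemma mulRE (x y : R) : (x * y)%R = Rmult x y. Proof. by []. Qed.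
Lemma addRE (x y : R) : (x + y)%R = Rplus x y. Proof. by []. Qed.
Lemma comm5 (a L b G c : R) : a * L * b * G * c = L * G * c * a * b.
Proof. rewrite !mulRE; change (@eq R (Rmult (Rmult (Rmult (Rmult a L) b) G) c) (Rmult (Rmult (Rmult (Rmult L G) c) a) b)); ring. Qed.

Lemma rowsub_diag s m p (g : 'I_s -> 'I_m) (Q : 'M[R]_(m, p)) (d : 'rV[R]_m) :
  rowsub g (diag_mx d *m Q) = diag_mx (\row_a d 0 (g a)) *m rowsub g Q.
Proof. by rewrite !mul_diag_mx; apply/matrixP => i j; rewrite !mxE. Qed.

Lemma colsub_diag s m p (g : 'I_s -> 'I_m) (P : 'M[R]_(p, m)) (d : 'rV[R]_m) :
  colsub g (P *m diag_mx d) = colsub g P *m diag_mx (\row_a d 0 (g a)).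
Proof. by rewrite !mul_mx_diag; apply/matrixP => i j; rewrite !mxE. Qed.

Lemma detN n r (A : 'M[R]_(n, r)) (B : 'M[R]_(r, n)) lam gam :
  \det (Nmx A B lam gam) = Dexp A B lam gam.
Proof.
have -> : Nmx A B lam gam = (row_base A *m diag_mx (\row_j lam j)) *m
     (B *m (diag_mx (\row_i gam i) *m col_base A)) by rewrite /Nmx !mulmxA.
rewrite cauchy_binet /Dexp exchange_big /=.
apply: eq_bigr => J _; rewrite /CBt.
case: (#|J| =P \rank A) => [hJ|hJ]; last first.
  by rewrite big1 // => I _; rewrite mpd0 ?mulr0 //; right; apply/eqP.
rewrite colsub_diag det_mulmx det_diag.
rewrite -mul_rowsub_mx cauchy_binet !big_distrr /=.
apply: eq_bigr => I _; rewrite /CBt.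
case: (#|I| =P \rank A) => [hI|hI]; last first.
  by rewrite mpd0 ?mulr0 // ?mul0r //; left; apply/eqP.
rewrite rowsub_diag det_mulmx det_diag (mpdE B hI hJ) minor_prodE.
have -> : mxsub (ej hI) (ej hJ) A = rowsub (ej hI) (col_base A) *m colsub (ej hJ) (row_base A) by rewrite -mxsub_mul mulmx_base.
rewrite det_mulmx.
have -> : mxsub (ej hJ) (ej hI) B = colsub (ej hI) (rowsub (ej hJ) B).
  by apply/matrixP => i j; rewrite !mxE.
under eq_bigr => a _ do rewrite !mxE.
under [X in _ * (_ * (X * _))]eq_bigr => a _ do rewrite !mxE.
rewrite (prod_ej hJ lam) (prod_ej hI gam).
rewrite !mulrA; exact: comm5.
Qed.

Section Affine.
Variable V : finType.
Local Open Scope R_scope.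

Definition upd (w : V -> R) (v : V) (t : R) : V -> R :=
  fun u => if u == v then t else w u.

Definition maff (G : (V -> R) -> R) : Prop :=
  forall w v t, G (upd w v t) = Rplus (G (upd w v R0)) (Rmult t (Rminus (G (upd w v R1)) (G (upd w v R0)))).

Lemma upd_id (w : V -> R) v : upd w v (w v) = w.
Proof. apply: functional_extensionality => u; rewrite /upd; by case: eqP => [->|]. Qed.

Lemma L1 (G : (V -> R) -> R) : maff G -> forall w, (forall v, Rle R0 (w v)) -> Rlt (G w) R0 ->
  exists w', (forall v, Rlt R0 (w' v)) /\ Rlt (G w') R0.
Proof.
move=> hG w w0 Gw.
suff [w' [h1 [h2 h3]]] : exists w', (forall v, Rle R0 (w' v)) /\
   (forall v, v \in enum V -> Rlt R0 (w' v)) /\ Rlt (G w') R0.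
  by exists w'; split => // v; apply: h2; rewrite mem_enum.
elim: (enum V) => [|v S [w' [h1 [h2 h3]]]].
  by exists w.
case: (Rle_lt_or_eq_dec _ _ (h1 v)) => hv.
  exists w'; split => //; split => // u; rewrite in_cons; case/orP => [/eqP ->|] //; exact: h2.
have Ew : upd w' v R0 = w' by rewrite hv upd_id.
set a := G (upd w' v R0).
set b := Rminus (G (upd w' v R1)) a.
have ha : Rlt a R0 by rewrite /a Ew.
pose t := if Rle_dec b R0 then R1 else Rdiv (Ropp a) (Rmult 2 b).
have tpos : Rlt R0 t.
  rewrite /t; case: (Rle_dec b R0) => hb /=; first lra.
  apply: Rdiv_lt_0_compat; lra.
have Gt : Rlt (G (upd w' v t)) R0.
  rewrite hG -/a -/b /t; case: (Rle_dec b R0) => hb /=; first nra.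
  have -> : Rmult (Rdiv (Ropp a) (Rmult 2 b)) b = Rdiv (Ropp a) 2 by field; lra.
  lra.
exists (upd w' v t); split; last split => //.
  by move=> u; rewrite /upd; case: eqP => _; [lra | exact: h1].
move=> u; rewrite in_cons /upd; case: eqP => [_ _|_ /= hu] //; exact: h2.
Qed.

Lemma L2 (G : (V -> R) -> R) : maff G -> forall w1 w2,
  (forall v, Rlt R0 (w1 v)) -> (forall v, Rlt R0 (w2 v)) ->
  Rlt R0 (G w1) -> Rlt (G w2) R0 ->
  exists w, (forall v, Rlt R0 (w v)) /\ G w = R0.
Proof.
move=> hG w1 w2 p1 p2 g1 g2.
pose W (S : seq V) := foldr (fun v w => upd w v (w2 v)) w1 S.
have WE : forall S u, W S u = if u \in S then w2 u else w1 u.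
  elim=> [|v S IH] u //=; rewrite /upd in_cons IH.
  by case: eqP => [->|].
have Wpos : forall S u, Rlt R0 (W S u).
  by move=> S u; rewrite WE; case: ifP.
have WT : W (enum V) = w2.
  by apply: functional_extensionality => u; rewrite WE mem_enum.
suff : forall S, Rle (G (W S)) R0 -> exists w, (forall v, Rlt R0 (w v)) /\ G w = R0.
  by move=> H; apply: (H (enum V)); rewrite WT; lra.
elim=> [|v S IH] /=; first by rewrite /W /=; lra.
case: (Rle_dec (G (W S)) R0) => hS; first by move=> _; exact: IH.
move=> hvS.
set w := W S in hS hvS *.
set a := G (upd w v R0).
set b := Rminus (G (upd w v R1)) a.
have e1 : G w = Rplus a (Rmult (w v) b) by rewrite -{1}(upd_id w v) hG.
have e2 : G (upd w v (w2 v)) = Rplus a (Rmult (w2 v) b) by rewrite hG.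
have t1 : Rlt R0 (w v) by exact: Wpos.
have t2 := p2 v.
have bn0 : b <> R0 by move=> hb; rewrite hb in e1 e2; lra.
exists (upd w v (Rdiv (Ropp a) b)); split.
  move=> u; rewrite /upd; case: eqP => _; last exact: Wpos.
  case: (Rlt_or_le R0 b) => hb.
    apply: Rdiv_lt_0_compat => //; nra.
  have hb' : Rlt b R0 by lra.
  rewrite /Rdiv; apply: Rmult_neg_neg; [nra | exact: Rinv_lt_0_compat].
rewrite hG -/a -/b; field; exact: bn0.
Qed.

End Affine.

Section Reals.

Definition dq (a b : R) : R := if Req_EM_T a b then R1 else Rdiv (Rminus (exp a) (exp b)) (Rminus a b).

Lemma dq_pos a b : Rlt R0 (dq a b).
Proof.
rewrite /dq; case: Req_EM_T => h /=; first exact: Rlt_0_1.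
case: (Rlt_or_le a b) => hab.
  have := exp_increasing _ _ hab => he.
  rewrite /Rdiv; apply: Rmult_neg_neg; first lra.
  apply: Rinv_lt_0_compat; lra.
have hab' : Rlt b a by lra.
have := exp_increasing _ _ hab' => he.
apply: Rdiv_lt_0_compat; lra.
Qed.

Lemma dq_eq a b : Rminus (exp a) (exp b) = Rmult (dq a b) (Rminus a b).
Proof.
rewrite /dq; case: Req_EM_T => h /=; first by rewrite h; ring.
field; lra.
Qed.

Lemma exp_sum m (F : 'I_m -> R) : exp (\sum_(i < m) F i) = \prod_(i < m) exp (F i).
Proof.
elim/big_rec2: _ => [|i x y _ <-]; first exact: exp_0.
exact: exp_plus.
Qed.

Lemma monomials_exp n r (B : 'M[R]_(r, n)) (x : 'I_n -> R) j :
  monomials B x j = exp (\sum_(i < n) B j i * ln (x i)).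
Proof. by rewrite exp_sum /monomials; apply: eq_bigr => i _; rewrite /Rpower. Qed.

Lemma prod_pos (T : finType) (P : pred T) (F : T -> R) :
  (forall i, Rlt R0 (F i)) -> Rlt R0 (\prod_(i | P i) F i).
Proof.
move=> h; elim/big_rec: _ => [|i x _ hx]; first exact: Rlt_0_1.
exact: Rmult_lt_0_compat.
Qed.

Lemma sum_ge0 (T : finType) (P : pred T) (F : T -> R) :
  (forall i, P i -> Rle R0 (F i)) -> Rle R0 (\sum_(i | P i) F i).
Proof.
move=> h; elim/big_rec: _ => [|i x Pi hx]; first exact: Rle_refl.
have := h i Pi; rewrite addRE; lra.
Qed.

Lemma sum_gt0 (T : finType) (F : T -> R) i0 :
  (forall i, Rle R0 (F i)) -> Rlt R0 (F i0) -> Rlt R0 (\sum_i F i).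
Proof.
move=> h h0; rewrite (bigD1 i0) //= addRE.
apply: Rplus_lt_le_0_compat => //; exact: sum_ge0.
Qed.

End Reals.

Lemma fdiff n r (A : 'M[R]_(n, r)) (B : 'M[R]_(r, n)) (kappa lam : 'I_r -> R) (gam x y : 'I_n -> R) :
  (forall j, lam j * (\sum_k B j k * (ln (x k) - ln (y k))) = kappa j * (monomials B x j - monomials B y j)) ->
  (forall k, gam k * (x k - y k) = ln (x k) - ln (y k)) ->
  forall i, f_kappa A B kappa x i - f_kappa A B kappa y i =
   (A *m diag_mx (\row_j lam j) *m B *m diag_mx (\row_k gam k) *m \col_k (x k - y k)) i 0.
Proof.
move=> hl hg i.
rewrite -!mulmxA mul_diag_mx mul_diag_mx !mxE /f_kappa -sumrB.
apply: eq_bigr => j _; rewrite !mxE.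
rewrite (eq_bigr (fun k => B j k * (ln (x k) - ln (y k)))); last by move=> k _; rewrite !mxE hg.
by rewrite hl mulrA -mulrBr.
Qed.

Lemma reassoc n r s (C : 'M[R]_(n, s)) (F : 'M[R]_(s, r)) (L : 'M[R]_r) (B : 'M[R]_(r, n))
  (G : 'M[R]_n) (v : 'cV[R]_r) :
  (C *m F) *m L *m B *m G *m ((C *m F) *m v) = C *m (F *m L *m B *m G *m C) *m (F *m v).
Proof. by rewrite !mulmxA. Qed.

Lemma key_assoc n r (A : 'M[R]_(n, r)) (B : 'M[R]_(r, n)) lam gam (v : 'cV[R]_r) :
  A *m diag_mx (\row_j lam j) *m B *m diag_mx (\row_k gam k) *m (A *m v) =
  col_base A *m Nmx A B lam gam *m (row_base A *m v).
Proof. by rewrite /Nmx -reassoc mulmx_base. Qed.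

Section Dir1.
Variables (n r : nat) (A : 'M[R]_(n, r)) (B : 'M[R]_(r, n)).
Local Notation s := (\rank A).

Hypothesis Hsign : forall (I I' : {set 'I_n}) (J J' : {set 'I_r})
       (hI : #|I| = s) (hJ : #|J| = s) (hI' : #|I'| = s) (hJ' : #|J'| = s),
       minor_prod A B hI hJ <> R0 -> minor_prod A B hI' hJ' <> R0 ->
       Rlt R0 (Rmult (minor_prod A B hI hJ) (minor_prod A B hI' hJ')).

Lemma term_ge0 (lam : 'I_r -> R) (gam : 'I_n -> R) (I0 : {set 'I_n}) (J0 : {set 'I_r}) (h0 : #|I0| = s) (h0' : #|J0| = s) (I : {set 'I_n}) (J : {set 'I_r}) :
  (forall j, Rlt R0 (lam j)) -> (forall i, Rlt R0 (gam i)) ->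
  minor_prod A B h0 h0' <> R0 ->
  Rle R0 (\prod_(j in J) lam j * \prod_(i in I) gam i * mpd A B I J * minor_prod A B h0 h0').
Proof.
move=> hl hg nz.
have pl := @prod_pos _ (mem J) lam hl.
have pg := @prod_pos _ (mem I) gam hg.
case: (#|I| =P s) => [hI|hI]; last by rewrite mpd0 ?Rmult_0_r ?Rmult_0_l; [exact: Rle_refl | left; apply/eqP].
case: (#|J| =P s) => [hJ|hJ]; last by rewrite mpd0 ?Rmult_0_r ?Rmult_0_l; [exact: Rle_refl | right; apply/eqP].
rewrite (mpdE B hI hJ).
case: (Req_EM_T (minor_prod A B hI hJ) R0) => [->|nz'].
  by rewrite Rmult_0_r Rmult_0_l; exact: Rle_refl.
have := Hsign nz' nz => hp.
set P1 := \prod_(j in J) lam j; set P2 := \prod_(i in I) gam i.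
have -> : Rmult (Rmult (Rmult P1 P2) (minor_prod A B hI hJ)) (minor_prod A B h0 h0') =
  Rmult (Rmult P1 P2) (Rmult (minor_prod A B hI hJ) (minor_prod A B h0 h0')) by ring.
left; apply: Rmult_lt_0_compat => //; exact: Rmult_lt_0_compat.
Qed.


Hypothesis Hex : exists (I : {set 'I_n}) (J : {set 'I_r}) (hI : #|I| = s) (hJ : #|J| = s),
  minor_prod A B hI hJ <> R0.

Lemma Dnz (lam : 'I_r -> R) (gam : 'I_n -> R) :
  (forall j, Rlt R0 (lam j)) -> (forall i, Rlt R0 (gam i)) -> Dexp A B lam gam <> R0.
Proof.
move=> hl hg; case: Hex => I0 [J0 [h0 [h0' nz]]].
suff : Rlt R0 (Rmult (Dexp A B lam gam) (minor_prod A B h0 h0')).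
  by move=> H E; rewrite E Rmult_0_l in H; lra.
rewrite -mulRE /Dexp big_distrl /=.
apply: (@sum_gt0 _ _ I0) => [I|].
  rewrite big_distrl /=; apply: sum_ge0 => J _; exact: term_ge0.
rewrite big_distrl /=; apply: (@sum_gt0 _ _ J0) => [J|]; first exact: term_ge0.
rewrite (mpdE B h0 h0').
have := Hsign nz nz => hp.
have pl := @prod_pos _ (mem J0) lam hl.
have pg := @prod_pos _ (mem I0) gam hg.
rewrite !mulRE.
set P1 := \prod_(j in J0) lam j; set P2 := \prod_(i in I0) gam i.
have -> : Rmult (Rmult (Rmult P1 P2) (minor_prod A B h0 h0')) (minor_prod A B h0 h0') =
  Rmult (Rmult P1 P2) (Rmult (minor_prod A B h0 h0') (minor_prod A B h0 h0')) by ring.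
apply: Rmult_lt_0_compat => //; exact: Rmult_lt_0_compat.
Qed.

End Dir1.

Lemma dq_eq' (a b : R) : exp a - exp b = dq a b * (a - b).
Proof. exact: dq_eq. Qed.

Lemma invRE (x : R) : x <> R0 -> x^-1 = Rinv x.
Proof. by move=> h; rewrite /GRing.inv /= /R_inv; case: eqP. Qed.

Lemma dir1 n r (A : 'M[R]_(n, r)) (B : 'M[R]_(r, n)) :
  (forall (I I' : {set 'I_n}) (J J' : {set 'I_r})
       (hI : #|I| = \rank A) (hJ : #|J| = \rank A)
       (hI' : #|I'| = \rank A) (hJ' : #|J'| = \rank A),
       minor_prod A B hI hJ <> R0 -> minor_prod A B hI' hJ' <> R0 ->
       Rlt R0 (Rmult (minor_prod A B hI hJ) (minor_prod A B hI' hJ'))) ->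
  (exists (I : {set 'I_n}) (J : {set 'I_r})
       (hI : #|I| = \rank A) (hJ : #|J| = \rank A),
       minor_prod A B hI hJ <> R0) ->
  forall kappa : 'I_r -> R, positive_vec kappa ->
     injective_wrt_image A (f_kappa A B kappa).
Proof.
move=> Hsign Hex kappa kp x y xp yp xy [v hv] fxy.
pose e k := dq (ln (x k)) (ln (y k)).
have e0 : forall k, e k <> R0 by move=> k; have := dq_pos (ln (x k)) (ln (y k)); rewrite -/(e k); lra.
pose gam k := (e k)^-1.
have gp : forall k, Rlt R0 (gam k) by move=> k; rewrite /gam invRE //; apply: Rinv_0_lt_compat; exact: dq_pos.
pose a j := \sum_k B j k * ln (x k).
pose b j := \sum_k B j k * ln (y k).
pose lam j := kappa j * dq (a j) (b j).
have lp : forall j, Rlt R0 (lam j) by move=> j; apply: Rmult_lt_0_compat; [exact: kp | exact: dq_pos].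
have hl : forall j, lam j * (\sum_k B j k * (ln (x k) - ln (y k))) =
                    kappa j * (monomials B x j - monomials B y j).
  move=> j; rewrite !monomials_exp -/(a j) -/(b j) dq_eq' /lam -mulrA; congr (_ * (_ * _)).
  by rewrite /a /b -sumrB; apply: eq_bigr => k _; rewrite mulrBr.
have hg : forall k, gam k * (x k - y k) = ln (x k) - ln (y k).
  move=> k; rewrite -{1}(exp_ln _ (xp k)) -{1}(exp_ln _ (yp k)) dq_eq' -/(e k) /gam mulrA mulVf ?mul1r //.
  by apply/eqP; exact: e0.
have fd := fdiff A hl hg.
pose vv : 'cV[R]_r := \col_j v j.
have uE : \col_k (x k - y k) = A *m vv.
  by apply/matrixP => i j; rewrite ord1 !mxE hv; apply: eq_bigr => k _; rewrite !mxE.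
rewrite uE key_assoc in fd.
pose t := row_base A *m vv.
have CNt : col_base A *m Nmx A B lam gam *m t = 0.
  apply/matrixP => i j; rewrite ord1 -fd mxE fxy; exact: subrr.
have Nt : Nmx A B lam gam *m t = 0.
  case/row_fullP: (col_base_full A) => Cl hCl.
  by rewrite -[Nmx _ _ _ _ *m t]mul1mx -hCl -(mulmxA Cl (col_base A)) (mulmxA (col_base A)) CNt mulmx0.
have Nu : Nmx A B lam gam \in unitmx.
  rewrite unitmxE unitfE detN; apply/eqP; exact: Dnz.
have t0 : t = 0 by rewrite -(mulKmx Nu t) Nt mulmx0.
apply: xy; apply: functional_extensionality => k.
have : (A *m vv) k 0 = 0.
  by rewrite -(mulmx_base A) -mulmxA -/t t0 mulmx0 mxE.
rewrite -uE mxE => /eqP; rewrite subr_eq0 => /eqP.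
done.
Qed.

Section PairProps.
Local Open Scope R_scope.
Definition Yv (u g : R) : R := if Req_EM_T u 0 then 1 else u / (exp (g * u) - 1).
Definition Xv (u g : R) : R := Yv u g * exp (g * u).

Lemma pair_props u g : 0 < g ->
  0 < Yv u g /\ 0 < Xv u g /\ Xv u g - Yv u g = u /\ ln (Xv u g) - ln (Yv u g) = g * u.
Proof.
move=> gp.
have YXp : 0 < Yv u g -> 0 < Xv u g by move=> h; rewrite /Xv; apply: Rmult_lt_0_compat => //; exact: exp_pos.
have lnE : 0 < Yv u g -> ln (Xv u g) - ln (Yv u g) = g * u.
  move=> h; rewrite /Xv ln_mult //; last exact: exp_pos.
  rewrite ln_exp; ring.
rewrite /Xv /Yv; case: Req_EM_T => [hu0|hu] /=; first rewrite hu0.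
  rewrite Rmult_0_r exp_0 Rmult_1_r; split; first lra. split; first lra. split; first ring.
  rewrite ln_1; ring.
have Yp : 0 < u / (exp (g * u) - 1).
  case: (Rlt_or_le 0 u) => hu0.
    have : exp 0 < exp (g * u) by apply: exp_increasing; nra.
    rewrite exp_0 => he; apply: Rdiv_lt_0_compat; lra.
  have hu1 : u < 0 by lra.
  have : exp (g * u) < exp 0 by apply: exp_increasing; nra.
  rewrite exp_0 => he; rewrite /Rdiv; apply: Rmult_neg_neg => //.
  apply: Rinv_lt_0_compat; lra.
have en : exp (g * u) - 1 <> 0.
  move=> h; rewrite h /Rdiv Rinv_0 Rmult_0_r in Yp; lra.
split => //; split; first by apply: Rmult_lt_0_compat => //; exact: exp_pos.
split; first by field.
rewrite ln_mult //; last exact: exp_pos.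
rewrite ln_exp; ring.
Qed.
End PairProps.

Lemma dir2a n r (A : 'M[R]_(n, r)) (B : 'M[R]_(r, n)) (lam : 'I_r -> R) (gam : 'I_n -> R) :
  (forall j, Rlt R0 (lam j)) -> (forall i, Rlt R0 (gam i)) -> Dexp A B lam gam = R0 ->
  ~ (forall kappa : 'I_r -> R, positive_vec kappa -> injective_wrt_image A (f_kappa A B kappa)).
Proof.
move=> lp gp D0 H.
pose N := Nmx A B lam gam.
have : \det N^T == 0 by rewrite det_tr /N detN D0.
case/det0P => w w0 wN.
pose t := w^T.
have t0 : t != 0 by apply: contraNneq w0 => ht; rewrite -[w]trmxK -/t ht trmx0.
have Nt : N *m t = 0 by rewrite /t -[N]trmxK -trmx_mul wN trmx0.
case/row_freeP: (row_base_free A) => Fr hFr.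
case/row_fullP: (col_base_full A) => Cl hCl.
pose vv := Fr *m t.
pose u := A *m vv.
have uE : u = col_base A *m t.
  by rewrite /u /vv -{1}(mulmx_base A) -(mulmxA (col_base A)) (mulmxA (row_base A)) hFr mul1mx.
have u0 : u != 0.
  apply: contraNneq t0 => hu.
  by rewrite -[t]mul1mx -hCl -mulmxA -uE hu mulmx0.
pose yv i := Yv (u i 0) (gam i).
pose xv i := Xv (u i 0) (gam i).
have PP i := pair_props (u i 0) (gp i).
pose a j := \sum_k B j k * ln (xv k).
pose b j := \sum_k B j k * ln (yv k).
have dq0 : forall j, dq (a j) (b j) != 0.
  by move=> j; apply/negP => /eqP E; have := dq_pos (a j) (b j); rewrite E; exact: Rlt_irrefl.
pose kappa j := lam j / dq (a j) (b j).
have kp : positive_vec kappa.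
  move=> j; rewrite /kappa invRE; last exact/eqP.
  apply: Rmult_lt_0_compat => //; apply: Rinv_0_lt_compat; exact: dq_pos.
have hl : forall j, lam j * (\sum_k B j k * (ln (xv k) - ln (yv k))) =
                    kappa j * (monomials B xv j - monomials B yv j).
  move=> j; rewrite !monomials_exp -/(a j) -/(b j) dq_eq' /kappa mulrA divfK //.
  by rewrite /a /b -sumrB; congr (_ * _); apply: eq_bigr => k _; rewrite mulrBr.
have hg : forall k, gam k * (xv k - yv k) = ln (xv k) - ln (yv k).
  move=> k; have [_ [_ [e1 e2]]] := PP k; rewrite /xv /yv; transitivity (gam k * u k 0); [congr (_ * _); exact: e1 | symmetry; exact: e2].
have fd := fdiff A hl hg.
have ucol : \col_k (xv k - yv k) = A *m vv.
  apply/matrixP => i j; rewrite ord1 mxE -/u.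
  by have [_ [_ [e1 _]]] := PP i; rewrite /xv /yv; exact: e1.
rewrite ucol key_assoc /vv (mulmxA (row_base A)) hFr mul1mx -/N -mulmxA Nt mulmx0 in fd.
apply: (H kappa kp xv yv).
- by move=> i; have [_ [h _]] := PP i.
- by move=> i; have [h _] := PP i.
- move=> exy; case/eqP: u0; apply/matrixP => i j; rewrite ord1 /u -ucol !mxE exy subrr.
  by [].

- exists (fun j => vv j 0) => i.
  have := congr1 (fun M : 'cV[R]_n => M i 0) ucol; rewrite !mxE => ->.
  by apply: eq_bigr.
- apply: functional_extensionality => i; apply/eqP; rewrite -subr_eq0; apply/eqP.
  by rewrite fd mxE.
Qed.

Definition isaff (phi : R -> R) : Prop := forall t, phi t = phi 0 + t * (phi 1 - phi 0).

Lemma isaff_ext (phi psi : R -> R) : (forall t, phi t = psi t) -> isaff psi -> isaff phi.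
Proof. by move=> e h t; rewrite !e h. Qed.

Lemma isaff_sum (T : finType) (phi : T -> R -> R) :
  (forall i, isaff (phi i)) -> isaff (fun t => \sum_i phi i t).
Proof.
move=> h t /=; rewrite (eq_bigr _ (fun i _ => h i t)) big_split /= -big_distrr /= sumrB.
by [].
Qed.

Lemma isaff_mulr c (phi : R -> R) : isaff phi -> isaff (fun t => phi t * c).
Proof. by move=> h t /=; rewrite h mulrDl -!mulrA mulrBl. Qed.

Lemma isaff_mull c (phi : R -> R) : isaff phi -> isaff (fun t => c * phi t).
Proof. by move=> h t /=; rewrite h mulrDr mulrCA mulrBr. Qed.

Lemma isaff_if (b : bool) : isaff (fun t => if b then t else 1).
Proof. by move=> t; case: b; rewrite ?subr0 ?add0r ?mulr1 ?subrr ?mulr0 ?addr0. Qed.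

Lemma prod_upd (T : finType) (K : {set T}) (h : T -> R) k0 t :
  \prod_(k in K) (if k == k0 then t else h k) = (if k0 \in K then t else 1) * \prod_(k in K | k != k0) h k.
Proof.
case: (boolP (k0 \in K)) => hk.
  rewrite (bigD1 k0) //= eqxx; congr (_ * _).
  by apply: eq_bigr => k /andP [_ /negPf ->].
rewrite mul1r; apply: eq_big => k.
  by case: (k =P k0) => [->|/eqP ne]; [rewrite (negbTE hk) | rewrite ?ne ?andbT].
move=> kK; case: eqP => // E; by rewrite -E kK in hk.
Qed.

Lemma isaff_prod (T : finType) (K : {set T}) (h : T -> R) k0 :
  isaff (fun t => \prod_(k in K) (if k == k0 then t else h k)).
Proof.
apply: (isaff_ext (fun t => prod_upd K h k0 t)).
exact: isaff_mulr (isaff_if _).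
Qed.

Section Dir2.
Variables (n r : nat) (A : 'M[R]_(n, r)) (B : 'M[R]_(r, n)).
Local Notation s := (\rank A).
Local Notation V := ('I_r + 'I_n)%type.

Definition Gf (w : V -> R) : R := Dexp A B (fun j => w (inl j)) (fun i => w (inr i)).

Lemma maffG : maff Gf.
Proof.
move=> w v t.
suff H : isaff (fun t => Gf (upd w v t)) by exact: H t.
case: v => [j0|i0].
  have E : forall t, Gf (upd w (inl j0) t) = Dexp A B (fun j => if j == j0 then t else w (inl j)) (fun i => w (inr i)).
    by move=> t'; rewrite /Gf; congr Dexp.
  apply: (isaff_ext E).
  apply: isaff_sum => I; apply: isaff_sum => J.
  apply: isaff_mulr; apply: isaff_mulr; exact: isaff_prod.
have E : forall t, Gf (upd w (inr i0) t) = Dexp A B (fun j => w (inl j)) (fun i => if i == i0 then t else w (inr i)).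
  by move=> t'; rewrite /Gf; congr Dexp.
apply: (isaff_ext E).
apply: isaff_sum => I; apply: isaff_sum => J.
apply: isaff_mulr; apply: isaff_mull; exact: isaff_prod.
Qed.


Definition ind (I1 : {set 'I_n}) (J1 : {set 'I_r}) : V -> R :=
  fun k => match k with inl j => if j \in J1 then 1 else 0 | inr i => if i \in I1 then 1 else 0 end.

Lemma ind_ge0 I1 J1 v : Rle R0 (ind I1 J1 v).
Proof. case: v => [j|i] /=; case: ifP => _; [exact: Rle_0_1 | exact: Rle_refl | exact: Rle_0_1 | exact: Rle_refl]. Qed.

Lemma prod_ind (T : finType) (J J1 : {set T}) :
  \prod_(j in J) (if j \in J1 then 1 else 0 : R) = if J \subset J1 then 1 else 0.
Proof.
case: (boolP (J \subset J1)) => [sub|nsub].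
  by apply: big1 => j jJ; rewrite (subsetP sub).
case/subsetPn: nsub => j jJ jn.
by rewrite (bigD1 j) //= (negbTE jn) mul0r.
Qed.

Lemma term_ind (I I1 : {set 'I_n}) (J J1 : {set 'I_r}) (h1 : #|I1| = s) (h2 : #|J1| = s) :
  (if J \subset J1 then 1 else 0) * (if I \subset I1 then 1 else 0) * mpd A B I J =
  if (I == I1) && (J == J1) then mpd A B I J else 0.
Proof.
case: (boolP ((I == I1) && (J == J1))) => [/andP [/eqP -> /eqP ->]|ne].
  by rewrite !subxx !mul1r.
case: (boolP (J \subset J1)) => sJ; last by rewrite !mul0r.
case: (boolP (I \subset I1)) => sI; last by rewrite mulr0 mul0r.
rewrite !mul1r mpd0 //.
case: (boolP (I == I1)) => eI.
  right; apply/eqP => hJ; move: ne; rewrite eI /= eqEcard sJ h2 hJ leqnn.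
  by [].
left; apply/eqP => hI; move: eI; rewrite eqEcard sI h1 hI leqnn.
by [].
Qed.

Lemma G_ind (I1 : {set 'I_n}) (J1 : {set 'I_r}) (h1 : #|I1| = s) (h2 : #|J1| = s) :
  Gf (ind I1 J1) = minor_prod A B h1 h2.
Proof.
rewrite /Gf /Dexp /= -(mpdE B h1 h2).
transitivity (\sum_(I : {set 'I_n}) \sum_(J : {set 'I_r}) (if (I == I1) && (J == J1) then mpd A B I J else 0)).
  apply: eq_bigr => I _; apply: eq_bigr => J _.
  by rewrite !prod_ind term_ind.
rewrite (bigD1 I1) //= [X in _ + X]big1 ?addr0; last first.
  by move=> I nI; apply: big1 => J _; rewrite (negbTE nI).
rewrite (bigD1 J1) //= [X in _ + X]big1 ?addr0 ?eqxx //.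
by move=> J nJ; rewrite (negbTE nJ).
Qed.

Lemma maff_opp (V' : finType) (G : (V' -> R) -> R) : maff G -> maff (fun w => Ropp (G w)).
Proof. move=> h w v t /=; rewrite h; ring. Qed.

Lemma root_from (I : {set 'I_n}) (J : {set 'I_r}) (I' : {set 'I_n}) (J' : {set 'I_r})
  (hI : #|I| = s) (hJ : #|J| = s) (hI' : #|I'| = s) (hJ' : #|J'| = s) :
  Rlt R0 (minor_prod A B hI hJ) -> Rlt (minor_prod A B hI' hJ') R0 ->
  exists (lam : 'I_r -> R) (gam : 'I_n -> R), [/\ (forall j, Rlt R0 (lam j)), (forall i, Rlt R0 (gam i)) & Dexp A B lam gam = R0].
Proof.
move=> p1 p2.
have [w2 [w2p w2n]] : exists w, (forall v, Rlt R0 (w v)) /\ Rlt (Gf w) R0.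
  apply: (L1 (@maffG) (ind_ge0 I' J')).
  by rewrite (G_ind hI' hJ').
have [w1 [w1p w1n]] : exists w, (forall v, Rlt R0 (w v)) /\ Rlt (Ropp (Gf w)) R0.
  apply: (L1 (maff_opp (@maffG)) (ind_ge0 I J)).
  rewrite (G_ind hI hJ); lra.
have [w [wp w0]] := L2 (@maffG) w1p w2p ltac:(lra) w2n.
by exists (fun j => w (inl j)), (fun i => w (inr i)); split.
Qed.

End Dir2.

Lemma mixed_root n r (A : 'M[R]_(n, r)) (B : 'M[R]_(r, n)) (I : {set 'I_n}) (J : {set 'I_r}) (I' : {set 'I_n}) (J' : {set 'I_r})
  (hI : #|I| = \rank A) (hJ : #|J| = \rank A) (hI' : #|I'| = \rank A) (hJ' : #|J'| = \rank A) :
  Rlt (Rmult (minor_prod A B hI hJ) (minor_prod A B hI' hJ')) R0 ->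
  exists (lam : 'I_r -> R) (gam : 'I_n -> R), [/\ (forall j, Rlt R0 (lam j)),
     (forall i, Rlt R0 (gam i)) & Dexp A B lam gam = R0].
Proof.
move=> h.
case: (Rlt_or_le R0 (minor_prod A B hI hJ)) => h1.
  apply: (@root_from n r A B I J I' J' hI hJ hI' hJ' h1); nra.
apply: (@root_from n r A B I' J' I J hI' hJ' hI hJ); first nra.
case: h1 => // E; rewrite E Rmult_0_l in h; lra.
Qed.

Local Close Scope ring_scope.

Theorem mainTheorem14 (n r : nat) (A : 'M[R]_(n, r)) (B : 'M[R]_(r, n)) :
  (forall kappa : 'I_r -> R, positive_vec kappa ->
     injective_wrt_image A (f_kappa A B kappa))
  <->
  ((forall (I I' : {set 'I_n}) (J J' : {set 'I_r})
       (hI : #|I| = \rank A) (hJ : #|J| = \rank A)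
       (hI' : #|I'| = \rank A) (hJ' : #|J'| = \rank A),
       minor_prod A B hI hJ <> R0 -> minor_prod A B hI' hJ' <> R0 ->
       Rlt R0 (Rmult (minor_prod A B hI hJ) (minor_prod A B hI' hJ')))
   /\
   (exists (I : {set 'I_n}) (J : {set 'I_r})
       (hI : #|I| = \rank A) (hJ : #|J| = \rank A),
       minor_prod A B hI hJ <> R0)).
Proof.
split; last by case=> Hs He; exact: dir1.
move=> H; apply: NNPP => Hc.
have [lam [gam [lp gp D0]]] : exists (lam : 'I_r -> R) (gam : 'I_n -> R), [/\ (forall j, Rlt R0 (lam j)),
     (forall i, Rlt R0 (gam i)) & Dexp A B lam gam = R0].
  case: (classic (exists (I : {set 'I_n}) (J : {set 'I_r})
       (hI : #|I| = \rank A) (hJ : #|J| = \rank A), minor_prod A B hI hJ <> R0)) => [ex|nex].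
    apply: NNPP => nroot; apply: Hc; split => // I I' J J' hI hJ hI' hJ' nz nz'.
    case: (Rlt_or_le R0 (Rmult (minor_prod A B hI hJ) (minor_prod A B hI' hJ'))) => // hle.
    exfalso; apply: nroot; apply: (mixed_root (hI := hI) (hJ := hJ) (hI' := hI') (hJ' := hJ')).
    case: hle => // E; exfalso; case: (Rmult_integral _ _ E) => //.
  exists (fun _ => R1), (fun _ => R1); split; try by move=> ?; exact: Rlt_0_1.
  rewrite /Dexp; apply: big1 => I _; apply: big1 => J _.
  case: (#|I| =P \rank A) => [hI|hI]; last by rewrite mpd0 ?mulr0 //; left; apply/eqP.
  case: (#|J| =P \rank A) => [hJ|hJ]; last by rewrite mpd0 ?mulr0 //; right; apply/eqP.
  rewrite (mpdE B hI hJ).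
  have -> : minor_prod A B hI hJ = R0.
    apply: NNPP => nz; apply: nex; by exists I, J, hI, hJ.
  by rewrite mulr0.
exact: (dir2a lp gp D0 H).
Qed.
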